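(* Let $Q:\mathbb{R}_{\ge0}\to\overline{\mathcal Q}_n$ be Riemann-integrable and sufficiently exciting. Then every solution of the linear system $\dot x=-Q_tx$ satisfies $\lim_{t\to\infty}x(t)=0$.
   Context: $\sigma_{\min}$ smallest singular value; $\mathcal Q_n$ symmetric positive semidefinite $n\times n$ matrices; $\overline{\mathcal Q}_n=\{R\in\mathcal Q_n:|R|\le1\}$ with $|\cdot|$ the induced 2-norm. Let $\delta(\varepsilon,T):=\min\{\varepsilon/2,\varepsilon^3/(240T^5)\}$. $Q:\mathbb{R}_{\ge0}\to\mathcal Q_n$ is sufficiently exciting if there is a sequence $(\varepsilon_i,T_i)_{i\ge1}$ of pairs of positive reals with $\sigma_{\min}\big(\int_{t_i}^{t_i+T_i}Q_t\,dt\big)\ge\varepsilon_i$, where $t_1=0$, $t_i=\sum_{j<i}T_j$, and $\sum_{i=1}^\infty\delta(\varepsilon_i,T_i)=\infty$. *)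

(* Defs.v *)
From Stdlib Require Import Reals.
From Coquelicot Require Import Coquelicot.
From mathcomp Require Import all_boot all_algebra.
From mathcomp Require Import Rstruct.

Set Implicit Arguments.
Unset Strict Implicit.
Unset Printing Implicit Defensive.

Local Open Scope R_scope.

Definition sqnorm2 (n : nat) (v : 'cV[R]_n) : R :=
  \big[Rplus/0]_(i < n) (v i ord0 * v i ord0).

Definition norm2 (n : nat) (v : 'cV[R]_n) : R := sqrt (sqnorm2 v).

Definition psd_sym (n : nat) (M : 'M[R]_n) : Prop :=
  trmx M = M /\ forall v : 'cV[R]_n, 0 <= ((mulmx (mulmx (trmx v) M) v) ord0 ord0).

Definition opnorm_le1 (n : nat) (M : 'M[R]_n) : Prop :=
  forall v : 'cV[R]_n, norm2 (mulmx M v) <= norm2 v.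

Definition Qbar (n : nat) (M : 'M[R]_n) : Prop := psd_sym M /\ opnorm_le1 M.

(* smallest singular value: sigma_min M = inf_{|v| = 1} |M v|
   (as an extended real; for n = 0 the infimum of the empty set is +oo) *)
Definition sigma_min (n : nat) (M : 'M[R]_n) : Rbar :=
  Glb_Rbar (fun r => exists v : 'cV[R]_n, norm2 v = 1 /\ r = norm2 (mulmx M v)).

Definition mx_RInt (n : nat) (Q : R -> 'M[R]_n) (a b : R) : 'M[R]_n :=
  \matrix_(i < n, j < n) RInt (fun t => Q t i j) a b.

Definition riemann_integrable_nonneg (n : nat) (Q : R -> 'M[R]_n) : Prop :=
  forall (i j : 'I_n) (a b : R), 0 <= a -> a <= b ->
    ex_RInt (fun t => Q t i j) a b.

Definition delta (eps T : R) : R :=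
  Rmin (eps / 2) (eps ^ 3 / (240 * T ^ 5)).

(* t_i = sum_{j < i} T_j  (0-indexed, so t_0 = 0) *)
Definition tseq (T : nat -> R) (i : nat) : R :=
  \big[Rplus/0]_(j < i) T j.

Definition sufficiently_exciting (n : nat) (Q : R -> 'M[R]_n) : Prop :=
  exists (eps T : nat -> R),
    (forall i, 0 < eps i /\ 0 < T i) /\
    (forall i, Rbar_le (Rbar.Finite (eps i))
                 (sigma_min (mx_RInt Q (tseq T i) (tseq T i + T i)))) /\
    is_lim_seq (fun N => \big[Rplus/0]_(i < N) delta (eps i) (T i)) p_infty.

(* (Caratheodory) solution of  x' = - Q_t x  on R_{>=0}:
   x(t) = x(0) - \int_0^t Q_s x(s) ds  for every t >= 0. *)
Definition is_solution (n : nat) (Q : R -> 'M[R]_n) (x : R -> 'cV[R]_n) : Prop :=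
  forall (t : R) (i : 'I_n), 0 <= t ->
    ex_RInt (fun s => (mulmx (Q s) (x s)) i ord0) 0 t /\
    x t i ord0 = x 0 i ord0 - RInt (fun s => (mulmx (Q s) (x s)) i ord0) 0 t.

(* Main.v *)
Require Import Defs.
From Stdlib Require Import Reals.
From Coquelicot Require Import Coquelicot.
From mathcomp Require Import all_boot all_order all_algebra.
From mathcomp Require Import Rstruct.
From mathcomp Require Import ring lra.
Import Order.TTheory GRing.Theory Num.Theory.
Set Implicit Arguments. Unset Strict Implicit. Unset Printing Implicit Defensive.
Local Open Scope ring_scope.

Definition ip {n} (u v : 'cV[R]_n) : R := \sum_(i < n) u i ord0 * v i ord0.
Definition qf {n} (M : 'M[R]_n) (v : 'cV[R]_n) : R := ip v (M *m v).

Lemma ipC n (u v : 'cV[R]_n) : ip u v = ip v u.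
Proof. by apply: eq_bigr => i _; rewrite mulrC. Qed.
Lemma ipDl n (u v w : 'cV[R]_n) : ip (u + v) w = ip u w + ip v w.
Proof. by rewrite /ip -big_split; apply: eq_bigr => i _; rewrite !mxE mulrDl. Qed.
Lemma ipDr n (u v w : 'cV[R]_n) : ip w (u + v) = ip w u + ip w v.
Proof. by rewrite ipC ipDl ![ip _ w]ipC. Qed.
Lemma ipZl n a (u v : 'cV[R]_n) : ip (a *: u) v = a * ip u v.
Proof. by rewrite /ip mulr_sumr; apply: eq_bigr => i _; rewrite !mxE mulrA. Qed.
Lemma ipZr n a (u v : 'cV[R]_n) : ip v (a *: u) = a * ip v u.
Proof. by rewrite ipC ipZl ipC. Qed.
Lemma ipNl n (u v : 'cV[R]_n) : ip (- u) v = - ip u v.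
Proof. by rewrite -scaleN1r ipZl mulN1r. Qed.
Lemma ipNr n (u v : 'cV[R]_n) : ip v (- u) = - ip v u.
Proof. by rewrite ipC ipNl ipC. Qed.
Lemma ipBl n (u v w : 'cV[R]_n) : ip (u - v) w = ip u w - ip v w.
Proof. by rewrite ipDl ipNl. Qed.
Lemma ipBr n (u v w : 'cV[R]_n) : ip w (u - v) = ip w u - ip w v.
Proof. by rewrite ipDr ipNr. Qed.
Lemma ip0r n (u : 'cV[R]_n) : ip u 0 = 0.
Proof. by rewrite /ip big1 // => i _; rewrite mxE mulr0. Qed.
Lemma ip0l n (u : 'cV[R]_n) : ip 0 u = 0.
Proof. by rewrite ipC ip0r. Qed.
Lemma ip_ge0 n (u : 'cV[R]_n) : 0 <= ip u u.
Proof. by apply: sumr_ge0 => i _; rewrite -expr2 sqr_ge0. Qed.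
Lemma ipE n (u v : 'cV[R]_n) : ip u v = (u^T *m v) ord0 ord0.
Proof. by rewrite mxE; apply: eq_bigr => i _; rewrite mxE. Qed.
Lemma ip_mul n (M : 'M[R]_n) u v : ip u (M *m v) = ip (M^T *m u) v.
Proof. by rewrite !ipE trmx_mul trmxK mulmxA. Qed.
Lemma sqnormE n (v : 'cV[R]_n) : sqnorm2 v = ip v v.
Proof. by []. Qed.
Lemma ip_sym n (M : 'M[R]_n) u v : M^T = M -> ip u (M *m v) = ip (M *m u) v.
Proof. by move=> h; rewrite ip_mul h. Qed.
Lemma qf_psdE n (M : 'M[R]_n) v : ((v^T *m M) *m v) ord0 ord0 = qf M v.
Proof. by rewrite /qf ipE mulmxA. Qed.
Lemma qfD n (M : 'M[R]_n) u v : M^T = M ->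
  qf M (u + v) = qf M u + 2 * ip u (M *m v) + qf M v.
Proof.
move=> hs; rewrite /qf mulmxDr !ipDl !ipDr.
have e : ip v (M *m u) = ip u (M *m v) by rewrite ip_sym // ipC.
rewrite e; ring.
Qed.
Lemma qfZ n (M : 'M[R]_n) a v : qf M (a *: v) = a ^+ 2 * qf M v.
Proof. by rewrite /qf -scalemxAr ipZl ipZr mulrA expr2. Qed.
Lemma qfN n (M : 'M[R]_n) v : qf M (- v) = qf M v.
Proof. by rewrite -scaleN1r qfZ expr2 mulN1r opprK mul1r. Qed.

Definition psdm {n} (M : 'M[R]_n) := M^T = M /\ forall v, 0 <= qf M v.

Lemma CS_psd n (M : 'M[R]_n) u v : psdm M ->
  (ip u (M *m v)) ^+ 2 <= qf M u * qf M v.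
Proof.
move=> [hs hp].
set A := qf M v; set B := ip u (M *m v); set C := qf M u.
have key : forall t, 0 <= C + 2 * t * B + t ^+ 2 * A.
  move=> t; have := hp (u + t *: v); rewrite qfD // qfZ -scalemxAr ipZr.
  by rewrite /A /B /C; congr (0 <= _); ring.
have A0 : 0 <= A by apply: hp.
have C0 : 0 <= C by apply: hp.
have [Az|Ap] := eqVneq A 0.
  have [Bz|Bn] := eqVneq B 0; first by rewrite Bz Az; lra.
  have := key (- (C + 1) / (2 * B)); rewrite Az mulr0 addr0.
  have -> : 2 * (- (C + 1) / (2 * B)) * B = - (C + 1) by field; rewrite Bn.
  lra.
have Apos : 0 < A by rewrite lt_def Ap A0.
have := key (- B / A).
have -> : C + 2 * (- B / A) * B + (- B / A) ^+ 2 * A = (C * A - B ^+ 2) / A by field.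
rewrite pmulr_lge0 ?invr_gt0 // subr_ge0 mulrC //.
Qed.

Lemma qf_sq n (M : 'M[R]_n) c : psdm M -> 0 <= c ->
  (forall v, qf M v <= c * ip v v) ->
  forall v, ip (M *m v) (M *m v) <= c * qf M v.
Proof.
move=> hM c0 hc v.
have := CS_psd (M *m v) v hM.
have h1 := hc (M *m v).
have X0 := ip_ge0 (M *m v).
have q0 : 0 <= qf M v by case: hM => _ ->.
have q1 : 0 <= qf M (M *m v) by case: hM => _ ->.
move: (ip (M *m v) (M *m v)) X0 h1 => X X0 h1 h2.
have h3 : X ^+ 2 <= c * X * qf M v.
  by apply: (le_trans h2); apply: ler_wpM2r.
have [Xz|Xp] := eqVneq X 0; first by rewrite Xz; apply: mulr_ge0.
have Xpos : 0 < X by rewrite lt_def Xp X0.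
rewrite -(ler_pM2r Xpos).
have -> : c * qf M v * X = c * X * qf M v by ring.
by rewrite -expr2.
Qed.
Lemma le_eps (a b k : R) : 0 <= k -> (forall eta, 0 < eta -> a <= b + k * eta) -> a <= b.
Proof.
move=> k0 h; rewrite leNgt; apply/negP => hab.
have k1 : 0 < k + 1 by lra.
have ep : 0 < (a - b) / (k + 1) by apply: divr_gt0; lra.
have := h _ ep.
have -> : k * ((a - b) / (k + 1)) = (a - b) - (a - b) / (k + 1).
  by field; rewrite lt0r_neq0.
lra.
Qed.

Lemma normalize n (w : 'cV[R]_n) : ip w w != 0 -> exists t, 0 < t /\ t ^+ 2 * ip w w = 1.
Proof.
move=> hw; have wp : 0 < ip w w by rewrite lt_def hw ip_ge0.
exists (sqrt (ip w w))^-1; split.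
  by rewrite invr_gt0; apply/RltP; apply: sqrt_lt_R0; apply/RltP.
have hs : sqrt (ip w w) * sqrt (ip w w) = ip w w.
  by apply: sqrt_sqrt; apply/RleP; apply: ltW.
have sp : sqrt (ip w w) != 0.
  by rewrite gt_eqF //; apply/RltP; apply: sqrt_lt_R0; apply/RltP.
by rewrite expr2 -{3}hs; field; rewrite sp.
Qed.

Lemma spectral_lb n (M : 'M[R]_n) c e : psdm M -> 0 <= c ->
  (forall v, qf M v <= c * ip v v) -> 0 <= e ->
  (forall v, e ^+ 2 * ip v v <= ip (M *m v) (M *m v)) ->
  forall v, e * ip v v <= qf M v.
Proof.
move=> hM c0 hc e0 he v.
have [hM1 hM2] := hM.
have [v0|vn] := eqVneq (ip v v) 0; first by rewrite v0 mulr0; apply: hM2.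
have unitE : forall w t, t ^+ 2 * ip w w = 1 ->
   ip (t *: w) (t *: w) = 1 /\ qf M (t *: w) = t ^+ 2 * qf M w.
  move=> w t ht; split; last by rewrite qfZ.
  by rewrite ipZl ipZr mulrA -expr2.
pose E := fun r : R => exists w, ip w w = 1 /\ r = - qf M w.
have Eb : bound E.
  exists 0 => r [w [_ ->]]; apply/RleP; rewrite oppr_le0; apply: hM2.
have [t0 [t0p ht0]] := normalize vn.
have [u1 qu1] := unitE _ _ ht0.
have Ene : exists r, E r by exists (- qf M (t0 *: v)), (t0 *: v).
have [l [lub1 lub2]] := completeness E Eb Ene.
set m := - l.
have F1 : forall w, ip w w = 1 -> m <= qf M w.
  move=> w hw; have := lub1 (- qf M w); rewrite /m.
  by move=> /(_ (ex_intro _ w (conj hw erefl)))/RleP; rewrite lerNl.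
have F3 : forall w, m * ip w w <= qf M w.
  move=> w; have [w0|wn] := eqVneq (ip w w) 0; first by rewrite w0 mulr0; apply: hM2.
  have [t [tp ht]] := normalize wn.
  have [u2 qu2] := unitE _ _ ht.
  have := F1 _ u2; rewrite qu2 => h.
  have ipp : 0 < ip w w by rewrite lt_def wn ip_ge0.
  have : m * ip w w <= t ^+ 2 * qf M w * ip w w by rewrite ler_pM2r.
  by rewrite mulrAC ht mul1r.
have F2 : forall eta, 0 < eta -> exists w, ip w w = 1 /\ qf M w < m + eta.
  move=> eta etap; case: (Classical_Prop.classic (exists w, ip w w = 1 /\ qf M w < m + eta)) => // hno.
  exfalso.
  have ub : is_upper_bound E (l - eta).
    move=> r [w [hw ->]]; apply/RleP.
    have : ~~ (qf M w < m + eta) by apply/negP => h; apply: hno; exists w.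
    rewrite -leNgt /m RminusE => h; lra.
  have := lub2 _ ub; move/RleP; rewrite RminusE; lra.
have m0 : 0 <= m.
  have ub : is_upper_bound E 0.
    move=> r [w [_ ->]]; apply/RleP; rewrite oppr_le0; apply: hM2.
  by have := lub2 _ ub; move/RleP; rewrite /m R0E => h; lra.
have cm : m <= c.
  apply: (le_trans (F1 _ u1)); apply: (le_trans (hc _)); rewrite u1 mulr1 //.
pose N := M - m%:M.
have NE : forall w : 'cV[R]_n, N *m w = M *m w - m *: w.
  by move=> w; rewrite /N mulmxBl mul_scalar_mx.
have qN : forall w, qf N w = qf M w - m * ip w w.
  by move=> w; rewrite /qf NE ipBr ipZr.
have hN : psdm N.
  split; last by move=> w; rewrite qN subr_ge0.
  by rewrite /N linearB /= tr_scalar_mx hM1.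
have hcN : forall w, qf N w <= (c - m) * ip w w.
  by move=> w; rewrite qN mulrBl lerD2r.
have L5 := qf_sq hN (ltac:(lra) : 0 <= c - m) hcN.
have key : forall eta, 0 < eta -> e ^+ 2 <= m ^+ 2 + (c + m) * eta.
  move=> eta etap; have [w [hw hq]] := F2 eta etap.
  have := he w; rewrite hw mulr1.
  have -> : M *m w = N *m w + m *: w by rewrite NE subrK.
  rewrite !ipDl !ipDr !ipZl !ipZr hw.
  have e1 : ip (N *m w) w = qf N w by rewrite /qf ipC.
  rewrite e1.
  have hA := L5 w.
  have q0 : 0 <= qf N w by case: hN => _ ->.
  have q1 : qf N w < eta by rewrite qN hw mulr1; lra.
  have h1 : (c - m) * qf N w <= (c - m) * eta by apply: ler_wpM2l; lra.
  have h2 : m * qf N w <= m * eta by apply: ler_wpM2l => //; lra.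
  move=> h; apply: (le_trans h).
  have -> : ip (N *m w) (N *m w) + m * qf N w + (m * qf N w + m * (m * 1)) =
            ip (N *m w) (N *m w) + 2 * (m * qf N w) + m ^+ 2 by ring.
  have -> : m ^+ 2 + (c + m) * eta = (c - m) * eta + 2 * (m * eta) + m ^+ 2 by ring.
  lra.
have em2 : e ^+ 2 <= m ^+ 2.
  apply: (@le_eps _ _ (c + m) _ key); rewrite RplusE; lra.
have em : e <= m by nra.
apply: le_trans (F3 v); apply: ler_wpM2r => //; exact: ip_ge0.
Qed.
Lemma RInt_sum_seq (I : Type) (s : seq I) (f : I -> R -> R) a b :
  (forall j, ex_RInt (f j) a b) ->
  ex_RInt (fun t => \sum_(j <- s) f j t) a b /\
  RInt (fun t => \sum_(j <- s) f j t) a b = \sum_(j <- s) RInt (f j) a b.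
Proof.
move=> hf; elim: s => [|j s [IH1 IH2]].
  have -> : (fun t => \sum_(j <- [::]) f j t) = (fun _ => 0).
    by apply: FunctionalExtensionality.functional_extensionality => t; rewrite big_nil.
  split; first exact: ex_RInt_const.
  by rewrite RInt_const big_nil; exact: scal_zero_r.
have -> : (fun t => \sum_(k <- j :: s) f k t) = (fun t => plus (f j t) (\sum_(k <- s) f k t)).
  by apply: FunctionalExtensionality.functional_extensionality => t; rewrite big_cons.
split; first exact: ex_RInt_plus.
by rewrite RInt_plus // IH2 big_cons.
Qed.

Lemma ex_RInt_sum n (f : 'I_n -> R -> R) a b :
  (forall j, ex_RInt (f j) a b) -> ex_RInt (fun t => \sum_(j < n) f j t) a b.
Proof. by move=> h; case: (RInt_sum_seq (index_enum 'I_n) h). Qed.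

Lemma RInt_sum n (f : 'I_n -> R -> R) a b :
  (forall j, ex_RInt (f j) a b) ->
  RInt (fun t => \sum_(j < n) f j t) a b = \sum_(j < n) RInt (f j) a b.
Proof. by move=> h; case: (RInt_sum_seq (index_enum 'I_n) h). Qed.

Lemma ex_RInt_mulc (g : R -> R) c a b : ex_RInt g a b -> ex_RInt (fun t => g t * c) a b.
Proof.
move=> h; apply: (ex_RInt_ext (fun t => scal c (g t))); last exact: ex_RInt_scal.
by move=> t _; rewrite /scal /= /mult /= mulrC.
Qed.

Lemma RInt_mulc (g : R -> R) c a b : ex_RInt g a b -> RInt (fun t => g t * c) a b = RInt g a b * c.
Proof.
move=> h; rewrite (RInt_ext _ (fun t => scal c (g t))); last first.
  by move=> t _; rewrite /scal /= /mult /= mulrC.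
by rewrite RInt_scal // /scal /= /mult /= mulrC.
Qed.
Definition vRInt n (f : R -> 'cV[R]_n) a b : 'cV[R]_n :=
  \col_(i < n) RInt (fun t => f t i ord0) a b.
Definition vex n (f : R -> 'cV[R]_n) a b := forall i, ex_RInt (fun t => f t i ord0) a b.

Lemma funE (f g : R -> R) : (forall t, f t = g t) -> f = g.
Proof. exact: FunctionalExtensionality.functional_extensionality. Qed.

Lemma ip_vRInt n (f : R -> 'cV[R]_n) w a b : vex f a b ->
  ex_RInt (fun t => ip w (f t)) a b /\ ip w (vRInt f a b) = RInt (fun t => ip w (f t)) a b.
Proof.
move=> hf.
have -> : (fun t => ip w (f t)) = (fun t => \sum_(i < n) (f t i ord0 * w i ord0)).
  by apply: funE => t; apply: eq_bigr => i _; rewrite mulrC.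
split; first by apply: ex_RInt_sum => i; apply: ex_RInt_mulc.
rewrite RInt_sum; last by move=> i; apply: ex_RInt_mulc.
by apply: eq_bigr => i _; rewrite RInt_mulc // mxE mulrC.
Qed.

Lemma vex_mul n (Q : R -> 'M[R]_n) v a b : (forall i j, ex_RInt (fun t => Q t i j) a b) ->
  vex (fun t => Q t *m v) a b.
Proof.
move=> hQ i.
have -> : (fun t => (Q t *m v) i ord0) = (fun t => \sum_(j < n) Q t i j * v j ord0).
  by apply: funE => t; rewrite mxE.
by apply: ex_RInt_sum => j; apply: ex_RInt_mulc.
Qed.

Lemma vRInt_mul n (Q : R -> 'M[R]_n) v a b : (forall i j, ex_RInt (fun t => Q t i j) a b) ->
  mx_RInt Q a b *m v = vRInt (fun t => Q t *m v) a b.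
Proof.
move=> hQ; apply/matrixP => i k; rewrite (ord1 k) !mxE.
have -> : (fun t => (Q t *m v) i ord0) = (fun t => \sum_(j < n) Q t i j * v j ord0).
  by apply: funE => t; rewrite mxE.
rewrite RInt_sum; last by move=> j; apply: ex_RInt_mulc.
by apply: eq_bigr => j _; rewrite RInt_mulc // mxE.
Qed.

Lemma vex_sub n (f g : R -> 'cV[R]_n) a b : vex f a b -> vex g a b -> vex (fun t => f t - g t) a b.
Proof.
move=> hf hg i.
apply: (ex_RInt_ext (fun t => minus (f t i ord0) (g t i ord0))); last by apply: ex_RInt_minus; [apply: hf|apply: hg].
by move=> t _; rewrite !mxE.
Qed.

Lemma vRInt_sub n (f g : R -> 'cV[R]_n) a b : vex f a b -> vex g a b ->
  vRInt (fun t => f t - g t) a b = vRInt f a b - vRInt g a b.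
Proof.
move=> hf hg; apply/matrixP => i k; rewrite (ord1 k) !mxE.
rewrite (RInt_ext _ (fun t => minus (f t i ord0) (g t i ord0))); last by move=> t _; rewrite !mxE.
by rewrite RInt_minus; [|apply: hf|apply: hg].
Qed.

Lemma qf_RInt n (Q : R -> 'M[R]_n) v a b : (forall i j, ex_RInt (fun t => Q t i j) a b) ->
  ex_RInt (fun t => qf (Q t) v) a b /\ qf (mx_RInt Q a b) v = RInt (fun t => qf (Q t) v) a b.
Proof.
move=> hQ; rewrite /qf vRInt_mul //; exact: ip_vRInt (vex_mul v hQ).
Qed.
Lemma entry_sq_le n (u : 'cV[R]_n) i : (u i ord0) ^+ 2 <= ip u u.
Proof.
rewrite /ip (bigD1 i) //= -expr2 lerDl; apply: sumr_ge0 => j _; rewrite -expr2; exact: sqr_ge0.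
Qed.

Lemma ip_le_half n (u w : 'cV[R]_n) : ip u w <= (ip u u + ip w w) / 2.
Proof.
have := ip_ge0 (u - w); rewrite !ipBl !ipBr [ip w u]ipC => h.
rewrite ler_pdivlMr //; lra.
Qed.

Lemma Qbar_psd n (M : 'M[R]_n) : Qbar M -> psdm M.
Proof.
move=> [[h1 h2] _]; split => // v; rewrite -qf_psdE; apply/RleP; exact: h2.
Qed.

Lemma Qbar_bound n (M : 'M[R]_n) : Qbar M -> forall v, ip (M *m v) (M *m v) <= ip v v.
Proof.
move=> [_ h] v; have := h v; rewrite /norm2 !sqnormE => /RleP.
by rewrite !RsqrtE ler_sqrt // ip_ge0.
Qed.

Lemma Qbar_qf n (M : 'M[R]_n) v : Qbar M -> 0 <= qf M v <= ip v v.
Proof.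
move=> hM; apply/andP; split; first by case: (Qbar_psd hM) => _ ->.
apply: (le_trans (ip_le_half _ _)); have := Qbar_bound hM v; lra.
Qed.

Lemma Qbar_entry n (M : 'M[R]_n) v i : Qbar M -> `|(M *m v) i ord0| <= Num.sqrt (ip v v).
Proof.
move=> hM; rewrite -sqrtr_sqr ler_sqrt ?ip_ge0 //.
exact: le_trans (entry_sq_le _ _) (Qbar_bound hM v).
Qed.
Lemma RminL (a b : R) : a <= b -> Rmin a b = a.
Proof. by move=> h; rewrite Rmin_left //; apply/RleP. Qed.
Lemma RmaxR (a b : R) : a <= b -> Rmax a b = b.
Proof. by move=> h; rewrite Rmax_right //; apply/RleP. Qed.

Lemma mxRInt_props n (Q : R -> 'M[R]_n) a b : 0 <= a -> a <= b ->
  (forall t, Rle 0 t -> Qbar (Q t)) -> riemann_integrable_nonneg Q ->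
  psdm (mx_RInt Q a b) /\ forall v, qf (mx_RInt Q a b) v <= (b - a) * ip v v.
Proof.
move=> a0 ab hQ hI.
have hE : forall i j, ex_RInt (fun t => Q t i j) a b.
  by move=> i j; apply: hI; apply/RleP.
have hpos : forall t, Rlt a t -> Qbar (Q t).
  move=> t /RltP at_; apply: hQ; apply/RleP; change (IZR Z0) with (0:R); exact: le_trans a0 (ltW at_).
split; first split.
- apply/matrixP => i j; rewrite !mxE; apply: RInt_ext => t.
  rewrite RminL // => -[h1 _].
  have [[hs _] _] := hpos t h1.
  by rewrite -{1}hs mxE.
- move=> v; have [h1 ->] := qf_RInt v hE.
  apply/RleP; apply: RInt_ge_0 => //; first by apply/RleP.
  move=> t [h2 _]; apply/RleP; by case/andP: (Qbar_qf v (hpos t h2)).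
- move=> v; have [h1 ->] := qf_RInt v hE.
  have -> : (b - a) * ip v v = RInt (fun _ => ip v v) a b.
    by rewrite RInt_const.
  apply/RleP; apply: RInt_le => //; first by apply/RleP.
  + exact: ex_RInt_const.
  + move=> t [h2 _]; apply/RleP; by case/andP: (Qbar_qf v (hpos t h2)).
Qed.
Lemma qf_par n (M : 'M[R]_n) u v : psdm M -> qf M (u + v) <= 2 * qf M u + 2 * qf M v.
Proof.
move=> [hs hp]; have := hp (u - v); rewrite qfD // qfN qfD //.
rewrite mulmxN ipNr; lra.
Qed.

Lemma ip_par n (u v : 'cV[R]_n) : ip (u + v) (u + v) <= 2 * ip u u + 2 * ip v v.
Proof.
have := ip_ge0 (u - v); rewrite !ipDl !ipDr !ipNl !ipNr [ip v u]ipC; lra.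
Qed.

Lemma ip_sumr n m (w : nat -> 'cV[R]_n) u : ip u (\sum_(j < m) w j) = \sum_(j < m) ip u (w j).
Proof.
elim: m => [|m IH]; first by rewrite !big_ord0 ip0r.
by rewrite !big_ord_recr /= ipDr IH.
Qed.

Lemma CS_sum n k (w : nat -> 'cV[R]_n) :
  ip (\sum_(j < k) w j) (\sum_(j < k) w j) <= k%:R * \sum_(j < k) ip (w j) (w j).
Proof.
elim: k => [|k IH]; first by rewrite !big_ord0 ip0r mul0r.
rewrite !big_ord_recr /=.
move: IH; set S := \sum_(j < k) w j; set s := \sum_(j < k) ip (w j) (w j) => IH.
rewrite !ipDl !ipDr [ip (w k) S]ipC.
have s0 : 0 <= s by apply: sumr_ge0 => j _; exact: ip_ge0.
have ww0 := ip_ge0 (w k).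
have SS0 := ip_ge0 S.
have [kz|kp] := posnP k.
  move: IH; rewrite /S /s kz !big_ord0 ip0r ip0l !mul1r => _; lra.
have kp' : 0 < k%:R :> R by rewrite ltr0n.
have h := ip_ge0 (S - k%:R *: w k).
rewrite !ipDl !ipDr !ipNl !ipNr !ipZl !ipZr [ip (w k) S]ipC in h.
rewrite -(ler_pM2l kp').
have -> : k.+1%:R = k%:R + 1 :> R by rewrite -addn1 natrD.
have h1 : (k%:R + 1) * ip S S <= (k%:R + 1) * (k%:R * s).
  by apply: ler_wpM2l => //; lra.
move: h h1 IH; set K := (k%:R : R); set A := ip S S; set B := ip S (w k); set C := ip (w k) (w k).
move=> h h1 IH.
have e1 : K * (A + B + (B + C)) = K * A + 2 * (K * B) + K * C by ring.
lra.
Qed.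
Lemma sum_part (F : nat -> R) k N : (k <= N)%N -> (forall i, (i < N)%N -> 0 <= F i) ->
  \sum_(i < k) F i <= \sum_(i < N) F i.
Proof.
move=> kN hF; rewrite (big_ord_widen N F kN) big_mkcond /=.
apply: ler_sum => i _; case: ifP => _ //; exact: hF.
Qed.

Lemma sum_const_ord N (c : R) : \sum_(i < N) c = N%:R * c.
Proof. by rewrite sumr_const card_ord mulr_natl. Qed.

Lemma vtele n (xk : nat -> 'cV[R]_n) k : xk 0%N - xk k = \sum_(j < k) (xk j - xk j.+1).
Proof.
have e := @telescope_sumr _ 0 k (fun j => - xk j) (leq0n k).
rewrite big_mkord in e.
have -> : xk 0%N - xk k = - xk k - - xk 0%N by rewrite opprK addrC.
by rewrite -e; apply: eq_bigr => j _; rewrite opprK addrC.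
Qed.

Lemma step_id n (u v : 'cV[R]_n) :
  - ip v v - - ip u u = 2 * ip u (u - v) - ip (u - v) (u - v).
Proof. rewrite !ipBl !ipBr [ip v u]ipC; ring. Qed.

Lemma discrete n N (h eps Z W r2 : R) (xk : nat -> 'cV[R]_n) (Mk : nat -> 'M[R]_n)
    (rk : nat -> 'cV[R]_n) :
  0 < h -> 0 <= eps -> 0 <= r2 ->
  (forall k, (k < N)%N -> xk k - xk k.+1 = Mk k *m xk k + rk k) ->
  (forall k, (k < N)%N -> psdm (Mk k) /\ forall v, qf (Mk k) v <= h * ip v v) ->
  (forall k, (k < N)%N -> ip (xk k - xk k.+1) (xk k - xk k.+1) <= W) ->
  (forall k, (k < N)%N -> ip (rk k) (rk k) <= r2) ->
  (forall k, (k < N)%N -> `|ip (xk k) (rk k)| <= Z) ->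
  eps * ip (xk 0%N) (xk 0%N) <= \sum_(k < N) qf (Mk k) (xk 0%N) ->
  (eps * ip (xk 0%N) (xk 0%N) - 4 * h * N%:R ^+ 3 * r2) / (1 + 2 * (h * N%:R) ^+ 2)
    - N%:R * (2 * Z + W) <= ip (xk 0%N) (xk 0%N) - ip (xk N) (xk N).
Proof.
move=> h0 e0 r20 H1 H2 H3 H4 H5 H6.
set E := \sum_(k < N) qf (Mk k) (xk k).
have q0 : forall k, (k < N)%N -> 0 <= qf (Mk k) (xk k).
  by move=> k kN; case: (H2 k kN) => -[_ ->].
have E0 : 0 <= E by apply: sumr_ge0 => k _; apply: q0.
have P2 : 2 * E - N%:R * (2 * Z + W) <= ip (xk 0%N) (xk 0%N) - ip (xk N) (xk N).
  have e := @telescope_sumr _ 0 N (fun k => - ip (xk k) (xk k)) (leq0n N).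
  rewrite big_mkord in e.
  have -> : ip (xk 0%N) (xk 0%N) - ip (xk N) (xk N) =
    - ip (xk N) (xk N) - - ip (xk 0%N) (xk 0%N) by rewrite opprK addrC.
  rewrite -e.
  rewrite -[N%:R * (2 * Z + W)]sum_const_ord /E mulr_sumr -sumrB; apply: ler_sum => k _.
  have kN := ltn_ord k.
  rewrite step_id.
  have -> : ip (xk k) (xk k - xk k.+1) = qf (Mk k) (xk k) + ip (xk k) (rk k) by rewrite H1 // ipDr.
  have hZ := H5 k kN; have hW := H3 k kN.
  move: hZ; rewrite ler_norml => /andP[hZ1 hZ2].
  lra.
have P4 : forall j, (j < N)%N ->
    ip (xk j - xk j.+1) (xk j - xk j.+1) <= 2 * h * qf (Mk j) (xk j) + 2 * r2.
  move=> j jN; rewrite H1 //.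
  apply: le_trans (ip_par _ _) _.
  have [hp hb] := H2 j jN.
  have := qf_sq hp (ltW h0) hb (xk j); have := H4 j jN; lra.
have P5 : forall k, (k <= N)%N ->
    ip (xk 0%N - xk k) (xk 0%N - xk k) <= N%:R * (2 * h * E + 2 * N%:R * r2).
  move=> k kN; rewrite vtele; apply: le_trans (CS_sum k (fun j => xk j - xk j.+1)) _.
  have s1 : \sum_(j < k) ip (xk j - xk j.+1) (xk j - xk j.+1)
            <= \sum_(j < k) (2 * h * qf (Mk j) (xk j) + 2 * r2).
    apply: ler_sum => j _; apply: P4; exact: leq_trans (ltn_ord j) kN.
  rewrite big_split /= -mulr_sumr sum_const_ord in s1.
  have s2 : \sum_(j < k) qf (Mk j) (xk j) <= E.
    apply: (@sum_part (fun j => qf (Mk j) (xk j)) k N) => // i iN; exact: q0.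
  have kN' : k%:R <= N%:R :> R by rewrite ler_nat.
  have k0 : 0 <= k%:R :> R by rewrite ler0n.
  have t0 : 0 <= \sum_(j < k) ip (xk j - xk j.+1) (xk j - xk j.+1).
    by apply: sumr_ge0 => j _; exact: ip_ge0.
  apply: (le_trans (y := k%:R * (2 * h * E + 2 * N%:R * r2))).
    apply: ler_wpM2l => //; apply: (le_trans s1).
    have : 2 * h * (\sum_(j < k) qf (Mk j) (xk j)) <= 2 * h * E.
      by apply: ler_wpM2l => //; lra.
    have : k%:R * (2 * r2) <= N%:R * (2 * r2) by apply: ler_wpM2r => //; lra.
    lra.
  apply: ler_wpM2r => //.
  have : 0 <= N%:R * r2 :> R by apply: mulr_ge0 => //; rewrite ler0n.
  have : 0 <= h * E by apply: mulr_ge0 => //; lra.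
  lra.
have P7 : \sum_(k < N) qf (Mk k) (xk 0%N) <=
          2 * E + N%:R * (2 * h * (N%:R * (2 * h * E + 2 * N%:R * r2))).
  rewrite -[N%:R * (2 * h * _)]sum_const_ord /E mulr_sumr -big_split /=; apply: ler_sum => k _.
  have kN := ltn_ord k.
  have [hp hb] := H2 k kN.
  have -> : xk 0%N = xk k + (xk 0%N - xk k) by rewrite addrC subrK.
  apply: le_trans (qf_par _ _ hp) _.
  have := hb (xk 0%N - xk k); have := P5 k (ltnW kN).
  have : 0 <= h by lra.
  move=> hh a1 a2.
  have : h * ip (xk 0%N - xk k) (xk 0%N - xk k) <= h * (N%:R * (2 * h * E + 2 * N%:R * r2)).
    by apply: ler_wpM2l.
  rewrite -/E => a3; lra.
set D := 1 + 2 * (h * N%:R) ^+ 2.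
have D0 : 0 < D by rewrite /D; have := sqr_ge0 (h * N%:R); lra.
have key : eps * ip (xk 0%N) (xk 0%N) - 4 * h * N%:R ^+ 3 * r2 <= D * (2 * E).
  apply: le_trans (_ : _ <= 2 * E + N%:R * (2 * h * (N%:R * (2 * h * E + 2 * N%:R * r2))) - 4 * h * N%:R ^+ 3 * r2) _.
    by apply: lerD => //; apply: le_trans H6 P7.
  rewrite le_eqVlt; apply/orP; left; apply/eqP; rewrite /D; ring.
have : (eps * ip (xk 0%N) (xk 0%N) - 4 * h * N%:R ^+ 3 * r2) / D <= 2 * E.
  by rewrite ler_pdivrMr // (mulrC _ D).
lra.
Qed.
Lemma sol_diff n (Q : R -> 'M[R]_n) x s t : is_solution Q x -> 0 <= s -> s <= t ->
  vex (fun u => Q u *m x u) s t /\ x s - x t = vRInt (fun u => Q u *m x u) s t.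
Proof.
move=> hx s0 st.
have s0R : Rle 0 s by apply/RleP.
have t0R : Rle 0 t by apply/RleP; exact: le_trans s0 st.
have stR : Rle s t by apply/RleP.
have hv : vex (fun u => Q u *m x u) s t.
  move=> i; apply: (ex_RInt_Chasles_2 _ 0); first by split.
  by case: (hx t i t0R).
split => //; apply/matrixP => i k; rewrite (ord1 k) !mxE.
have [e1 e2] := hx s i s0R; have [e3 e4] := hx t i t0R.
rewrite e2 e4.
have := RInt_Chasles (fun u => (Q u *m x u) i ord0) 0 s t e1 (hv i).
rewrite /plus /= => <-; rewrite !RminusE RplusE; lra.
Qed.

Lemma fin_bound n (P : 'I_n -> R -> Prop) :
  (forall i M M', P i M -> M <= M' -> P i M') -> (forall i, exists M, P i M) ->
  exists M, 0 <= M /\ forall i, P i M.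
Proof.
move=> mono ex.
suff : forall s : seq 'I_n, exists M, 0 <= M /\ forall i, i \in s -> P i M.
  move=> /(_ (enum 'I_n)) [M [M0 hM]]; exists M; split => // i; apply: hM.
  by rewrite mem_enum.
elim=> [|j s [M [M0 hM]]]; first by exists 0.
have [Mj hj] := ex j.
exists (`|Mj| + M); split; first by rewrite addr_ge0.
move=> i; rewrite in_cons => /orP [/eqP -> | hi].
  apply: mono hj _; have := ler_norm Mj; lra.
apply: mono (hM i hi) _; have := normr_ge0 Mj; lra.
Qed.

Lemma ip_entry_bound n (u : 'cV[R]_n) c : (forall i, `|u i ord0| <= c) -> ip u u <= n%:R * c ^+ 2.
Proof.
move=> hu; rewrite -sum_const_ord; apply: ler_sum => i _.
have := hu i; rewrite ler_norml => /andP [h1 h2]; nra.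
Qed.

Lemma ip_abs_bound n (u v : 'cV[R]_n) A B : (forall i, `|u i ord0| <= A) ->
  (forall i, `|v i ord0| <= B) -> `|ip u v| <= n%:R * (A * B).
Proof.
move=> hu hv; rewrite -sum_const_ord; apply: le_trans (ler_norm_sum _ _ _) _.
apply: ler_sum => i _; rewrite normrM; apply: ler_pM => //; exact: normr_ge0.
Qed.

Lemma mono_le (s : nat -> R) : (forall k, s k <= s k.+1) -> forall k m, (k <= m)%N -> s k <= s m.
Proof.
move=> hs k m km; rewrite -(subnK km); elim: (m - k)%N => [|d IH] //=.
by rewrite addSn; apply: le_trans IH (hs _).
Qed.

Lemma RInt_part (g : R -> R) (s : nat -> R) m : (forall k, s k <= s k.+1) ->
  ex_RInt g (s 0%N) (s m) -> RInt g (s 0%N) (s m) = \sum_(k < m) RInt g (s k) (s k.+1).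
Proof.
move=> hs; elim: m => [|m IH] hex.
  by rewrite big_ord0 RInt_point.
have o1 : Rle (s 0%N) (s m) by apply/RleP; apply: mono_le.
have o2 : Rle (s m) (s m.+1) by apply/RleP.
have e1 := ex_RInt_Chasles_1 g _ _ _ (conj o1 o2) hex.
have e2 := ex_RInt_Chasles_2 g _ _ _ (conj o1 o2) hex.
by rewrite big_ord_recr /= -IH // -(RInt_Chasles g _ _ _ e1 e2).
Qed.

Lemma single_le_sum n (f : 'I_n -> R) i : (forall j, 0 <= f j) -> f i <= \sum_j f j.
Proof. by move=> h; rewrite (bigD1 i) //= lerDl; apply: sumr_ge0. Qed.

Lemma lim_lemma (A B c : R) : 0 <= c -> (forall N, (0 < N)%N -> B <= A + c / N%:R) -> B <= A.
Proof.
move=> c0 h; apply: (@le_eps _ _ c c0) => eta etap.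
set N := (Num.Def.archi_bound eta^-1).+1.
have hN : eta^-1 < N%:R.
  apply: lt_le_trans (archi_boundP _) _; first by rewrite invr_ge0 ltW.
  by rewrite ler_nat.
have Np : 0 < N%:R :> R by rewrite ltr0n.
apply: le_trans (h N isT) _; rewrite lerD2l.
have h1 : 1 <= eta * N%:R by move: hN; rewrite -[eta^-1]mulr1 ltr_pdivrMl // => /ltW.
have h2 : N%:R^-1 <= eta by rewrite -div1r ler_pdivrMr // mulrC.
by apply: ler_wpM2l.
Qed.
Lemma energy n (Q : R -> 'M[R]_n) x a b eps :
  (forall t, Rle 0 t -> Qbar (Q t)) -> riemann_integrable_nonneg Q -> is_solution Q x ->
  0 <= a -> a < b -> 0 <= eps ->
  (forall v, eps ^+ 2 * ip v v <= ip (mx_RInt Q a b *m v) (mx_RInt Q a b *m v)) ->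
  eps * ip (x a) (x a) / (1 + 2 * (b - a) ^+ 2) <= ip (x a) (x a) - ip (x b) (x b).
Proof.
move=> hQ hI hx a0 ab e0 hexc.
pose F t := Q t *m x t.
set T := b - a.
have T0 : 0 < T by rewrite /T subr_gt0.
have b0 : 0 <= b by apply: le_trans a0 (ltW ab).
have b0R : Rle 0 b by apply/RleP.
have [K [K0 hK]] : exists K, 0 <= K /\ forall i t, 0 <= t <= b -> `|F t i ord0| <= K.
  apply: (fin_bound (P := fun i K => forall t, 0 <= t <= b -> `|F t i ord0| <= K)).
    by move=> i M M' h1 h2 t ht; exact: le_trans (h1 t ht) h2.
  move=> i; have [h1 _] := hx b i b0R.
  have [M hM] := ex_RInt_ub _ _ _ h1.
  exists M => t /andP [t1 t2].
  have : Rle (Rmin 0 b) t /\ Rle t (Rmax 0 b).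
    by rewrite RminL // RmaxR //; split; apply/RleP.
  by move=> /hM /RleP; rewrite /norm /= /abs /= RabsE.
have lip : forall i s t, a <= s -> s <= t -> t <= b ->
    `|x s i ord0 - x t i ord0| <= K * (t - s).
  move=> i s t h1 h2 h3.
  have s0 : 0 <= s by apply: le_trans a0 h1.
  have [hv he] := sol_diff hx s0 h2.
  have -> : x s i ord0 - x t i ord0 = (x s - x t) i ord0 by rewrite !mxE.
  rewrite he mxE -RabsE mulrC; apply/RleP; apply: abs_RInt_le_const.
  - by apply/RleP.
  - exact: hv.
  - move=> u [u1 u2]; apply/RleP; rewrite RabsE; apply: hK; apply/andP; split.
      by apply: le_trans s0 _; apply/RleP.
    by apply: le_trans _ h3; apply/RleP.
set X := \sum_j `|x a j ord0| + K * T.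
have hX : forall i s, a <= s -> s <= b -> `|x s i ord0| <= X.
  move=> i s h1 h2.
  have l1 := lip i a s (lexx a) h1 h2.
  have l2 : `|x a i ord0| <= \sum_j `|x a j ord0|.
    by rewrite (bigD1 i) //= lerDl; apply: sumr_ge0 => j _; exact: normr_ge0.
  have l3 : K * (s - a) <= K * T by apply: ler_wpM2l => //; rewrite /T; lra.
  have : `|x s i ord0| <= `|x a i ord0| + `|x a i ord0 - x s i ord0|.
    have e : x s i ord0 = x a i ord0 - (x a i ord0 - x s i ord0) by ring.
    rewrite {1}e; exact: ler_normB.
  rewrite /X; lra.
have X0 : 0 <= X.
  rewrite /X; apply: addr_ge0; first by apply: sumr_ge0 => j _; exact: normr_ge0.
  by apply: mulr_ge0 => //; exact: ltW.
pose sn : R := Num.sqrt n%:R.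
have sn0 : 0 <= sn by exact: sqrtr_ge0.
have sn2 : sn ^+ 2 = n%:R by rewrite sqr_sqrtr // ler0n.
pose C := T * (4 * n%:R * sn ^+ 2 * K ^+ 2 * T ^+ 4 + T * (2 * n%:R * X * sn * K + n%:R * K ^+ 2)).
have C0 : 0 <= C.
  have n0 : 0 <= n%:R :> R by rewrite ler0n.
  rewrite /C; apply: mulr_ge0; first exact: ltW.
  apply: addr_ge0; first by repeat apply: mulr_ge0 => //; try exact: ltW; try exact: sqr_ge0.
  apply: mulr_ge0; first exact: ltW.
  apply: addr_ge0; repeat apply: mulr_ge0 => //; exact: sqr_ge0.
apply: (lim_lemma C0) => N N0.
have Np : 0 < N%:R :> R by rewrite ltr0n.
set h := T / N%:R.
have h0 : 0 < h by rewrite /h divr_gt0.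
have hN : h * N%:R = T by rewrite /h mulrAC -mulrA divff ?mulr1 // gt_eqF.
pose s k := a + k%:R * h.
have sS : forall k, s k.+1 = s k + h.
  by move=> k; rewrite /s -addn1 natrD mulrDl mul1r addrA.
have s_mono : forall k, s k <= s k.+1 by move=> k; rewrite sS; lra.
have s0 : s 0%N = a by rewrite /s mulr0n mul0r addr0.
have sN : s N = b by rewrite /s mulrC hN /T; ring.
have s_ge : forall k, a <= s k.
  by move=> k; rewrite -{1}s0; apply: mono_le => //; exact: leq0n.
have s_ge0 : forall k, 0 <= s k by move=> k; apply: le_trans a0 (s_ge k).
have s_le : forall k, (k <= N)%N -> s k <= b by move=> k kN; rewrite -sN; apply: mono_le.
have sh : forall k, s k.+1 - s k = h by move=> k; rewrite sS; ring.
pose xk k := x (s k).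
pose Mk k := mx_RInt Q (s k) (s k.+1).
pose rk k := (xk k - xk k.+1) - Mk k *m xk k.
have hEk : forall k i j, ex_RInt (fun t => Q t i j) (s k) (s k.+1).
  by move=> k i j; apply: hI; apply/RleP.
have H1 : forall k, (k < N)%N -> xk k - xk k.+1 = Mk k *m xk k + rk k.
  by move=> k _; rewrite /rk [RHS]addrC subrK.
have H2 : forall k, (k < N)%N -> psdm (Mk k) /\ forall v, qf (Mk k) v <= h * ip v v.
  by move=> k _; have := mxRInt_props (s_ge0 k) (s_mono k) hQ hI; rewrite sh.
have H3 : forall k, (k < N)%N -> ip (xk k - xk k.+1) (xk k - xk k.+1) <= n%:R * (K * h) ^+ 2.
  move=> k kN; apply: ip_entry_bound => i; rewrite !mxE /xk -(sh k).
  by apply: lip => //; apply: s_le.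
have rk_b : forall k, (k < N)%N -> forall i, `|rk k i ord0| <= h * (sn * K * h).
  move=> k kN i.
  have [hv he] := sol_diff hx (s_ge0 k) (s_mono k).
  have hv2 := vex_mul (xk k) (hEk k).
  rewrite /rk /xk he /Mk (vRInt_mul _ (hEk k)) -vRInt_sub // mxE.
  rewrite -RabsE -{1}(sh k); apply/RleP; apply: abs_RInt_le_const.
  - by apply/RleP; exact: s_mono.
  - exact: (vex_sub hv hv2 i).
  - move=> u [/RleP u1 /RleP u2]; apply/RleP; rewrite RabsE -mulmxBr.
    have u0 : Rle 0 u by apply/RleP; apply: le_trans (s_ge0 k) u1.
    apply: le_trans (Qbar_entry _ _ (hQ u u0)) _.
    have hKh : 0 <= K * h by apply: mulr_ge0 => //; exact: ltW.
    have : ip (x u - x (s k)) (x u - x (s k)) <= n%:R * (K * h) ^+ 2.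
      apply: ip_entry_bound => j; rewrite !mxE distrC.
      apply: le_trans (lip j (s k) u (s_ge k) u1 (le_trans u2 (s_le _ kN))) _.
      apply: ler_wpM2l => //; rewrite -(sh k); lra.
    rewrite -(ler_sqrt _ ); last by apply: mulr_ge0; [rewrite ler0n|exact: sqr_ge0].
    move/le_trans; apply.
    by rewrite sqrtrM ?ler0n // sqrtr_sqr ger0_norm // mulrA.
have H4 : forall k, (k < N)%N -> ip (rk k) (rk k) <= n%:R * (h * (sn * K * h)) ^+ 2.
  by move=> k kN; apply: ip_entry_bound; apply: rk_b.
have H5 : forall k, (k < N)%N -> `|ip (xk k) (rk k)| <= n%:R * (X * (h * (sn * K * h))).
  move=> k kN; apply: ip_abs_bound; last exact: rk_b.
  by move=> i; apply: hX; [apply: s_ge | apply: s_le; exact: ltnW].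
have H6 : eps * ip (xk 0%N) (xk 0%N) <= \sum_(k < N) qf (Mk k) (xk 0%N).
  have [hp hb] := mxRInt_props a0 (ltW ab) hQ hI.
  apply: le_trans (spectral_lb hp (ltW T0) hb e0 hexc (xk 0%N)) _.
  have hE : forall i j, ex_RInt (fun t => Q t i j) a b by move=> i j; apply: hI; apply/RleP => //; exact: ltW.
  have [g1 ->] := qf_RInt (xk 0%N) hE.
  rewrite -{1}s0 -sN RInt_part //; last by rewrite s0 sN.
  rewrite le_eqVlt; apply/orP; left; apply/eqP; apply: eq_bigr => k _.
  by have [_ ->] := qf_RInt (xk 0%N) (hEk k).
have r20 : 0 <= n%:R * (h * (sn * K * h)) ^+ 2 by apply: mulr_ge0; [rewrite ler0n|exact: sqr_ge0].
have := discrete h0 e0 r20 H1 H2 H3 H4 H5 H6.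
rewrite /xk s0 sN hN.
set V := ip (x a) (x a) - ip (x b) (x b).
set P := 4 * h * N%:R ^+ 3 * (n%:R * (h * (sn * K * h)) ^+ 2).
set Er := N%:R * (2 * (n%:R * (X * (h * (sn * K * h)))) + n%:R * (K * h) ^+ 2).
set D := 1 + 2 * T ^+ 2.
have D1 : 1 <= D by rewrite /D; have := sqr_ge0 T; lra.
have P0 : 0 <= P.
  rewrite /P; apply: mulr_ge0; last exact: r20.
  by apply: mulr_ge0; [apply: mulr_ge0; [lra|exact: ltW]|rewrite exprn_ge0 // ler0n].
have c1 : (eps * ip (x a) (x a) - P) / D = eps * ip (x a) (x a) / D - P / D by rewrite mulrBl.
have c2 : P / D <= P.
  rewrite ler_pdivrMr; last lra.
  by rewrite -{1}(mulr1 P); apply: ler_wpM2l.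
have c3 : C / N%:R - (P + Er) = 4 * n%:R * sn ^+ 2 * K ^+ 2 * T ^+ 5 * (N%:R - 1) / N%:R ^+ 2.
  by rewrite /C /P /Er /h; field; rewrite gt_eqF.
have c4 : 0 <= 4 * n%:R * sn ^+ 2 * K ^+ 2 * T ^+ 5 * (N%:R - 1) / N%:R ^+ 2.
  apply: divr_ge0; last exact: sqr_ge0.
  apply: mulr_ge0; last by rewrite subr_ge0 ler1n.
  apply: mulr_ge0; last by rewrite exprn_ge0 // ltW.
  apply: mulr_ge0; last exact: sqr_ge0.
  apply: mulr_ge0; last exact: sqr_ge0.
  by apply: mulr_ge0; [lra|rewrite ler0n].
rewrite c1 => h1; lra.
Qed.
Lemma sigma_excite n (M : 'M[R]_n) e : 0 <= e -> Rbar_le (Rbar.Finite e) (sigma_min M) ->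
  forall v, e ^+ 2 * ip v v <= ip (M *m v) (M *m v).
Proof.
move=> e0 he v.
have [v0|vn] := eqVneq (ip v v) 0; first by rewrite v0 mulr0; exact: ip_ge0.
have [t [tp ht]] := normalize vn.
have hw : norm2 (t *: v) = 1.
  by rewrite /norm2 sqnormE ipZl ipZr mulrA -expr2 ht sqrt_1.
have [hlb _] := Glb_Rbar_correct (fun r => exists v : 'cV[R]_n, norm2 v = 1 /\ r = norm2 (M *m v)).
have := hlb (norm2 (M *m (t *: v))) (ex_intro _ (t *: v) (conj hw erefl)).
rewrite -/(sigma_min M) => h2.
have h3 := Rbar_le_trans _ _ _ he h2.
simpl in h3; move/RleP: h3; rewrite /norm2 sqnormE RsqrtE => h3.
have A0 := ip_ge0 (M *m (t *: v)).
have h4 : e ^+ 2 <= ip (M *m (t *: v)) (M *m (t *: v)).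
  rewrite -(sqr_sqrtr A0) !expr2; apply: ler_pM => //.
rewrite -scalemxAr ipZl ipZr mulrA -expr2 in h4.
have vp : 0 <= ip v v by exact: ip_ge0.
have := ler_wpM2r vp h4.
move=> h5; apply: le_trans h5 _.
have -> : t ^+ 2 * ip (M *m v) (M *m v) * ip v v = (t ^+ 2 * ip v v) * ip (M *m v) (M *m v) by ring.
by rewrite ht mul1r.
Qed.
Lemma delta_le (e T : R) : 0 < e -> 0 < T -> e <= T ->
  delta e T <= 2 * (e / (1 + 2 * T ^+ 2)).
Proof.
move=> e0 T0 eT.
rewrite /delta !RealsE /= ge_min.
have T2 : 0 <= T ^+ 2 by exact: sqr_ge0.
have D0 : 0 < 1 + 2 * T ^+ 2 by lra.
case: (lerP T 1) => hT; apply/orP; [left|right].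
  rewrite -subr_ge0 (_ : 2 * (e / (1 + 2 * T ^+ 2)) - e / 2 =
     e * (3 - 2 * T ^+ 2) / (2 * (1 + 2 * T ^+ 2))); last by field; rewrite gt_eqF.
  apply: divr_ge0; last lra.
  apply: mulr_ge0; first lra.
  have : T ^+ 2 <= 1 by rewrite expr2; nra.
  lra.
have T5 : 0 < T ^+ 5 by rewrite exprn_gt0.
rewrite -subr_ge0 (_ : 2 * (e / (1 + 2 * T ^+ 2)) - e ^+ 3 / (240 * T ^+ 5) =
   e * (480 * T ^+ 5 - e ^+ 2 * (1 + 2 * T ^+ 2)) / (240 * T ^+ 5 * (1 + 2 * T ^+ 2))); last first.
  by field; rewrite !gt_eqF //; apply: mulr_gt0.
apply: divr_ge0; last by apply: mulr_ge0; lra.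
apply: mulr_ge0; first lra.
have e2 : e ^+ 2 <= T ^+ 2 by rewrite !expr2; apply: ler_pM => //; lra.
have t1 : e ^+ 2 * (1 + 2 * T ^+ 2) <= T ^+ 2 * (1 + 2 * T ^+ 2) by apply: ler_wpM2r => //; lra.
have t2 : 1 <= T ^+ 2 by rewrite expr2; nra.
have t3 : T ^+ 2 * (1 + 2 * T ^+ 2) <= 3 * T ^+ 4.
  have -> : T ^+ 4 = T ^+ 2 * T ^+ 2 by rewrite -exprD.
  nra.
have t4 : T ^+ 4 <= T ^+ 5 by rewrite (exprS T 4) ler_peMl // ?exprn_ge0 //; lra.
lra.
Qed.
Lemma main_lemma (n : nat) (Q : R -> 'M[R]_n) :
  (forall t : R, Rle 0 t -> Qbar (Q t)) ->
  riemann_integrable_nonneg Q ->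
  sufficiently_exciting Q ->
  forall x : R -> 'cV[R]_n, is_solution Q x ->
  forall i : 'I_n, is_lim (fun t => x t i ord0) p_infty (Rbar.Finite 0).
Proof.
move=> hQ hI [ep [Tt [hpos [hsig hlim]]]] x hx i.
have n0 : (0 < n)%N := leq_ltn_trans (leq0n i) (ltn_ord i).
pose V t := ip (x t) (x t).
have V0 : forall t, 0 <= V t by move=> t; exact: ip_ge0.
pose ts k := tseq Tt k.
have tsS : forall k, ts k.+1 = ts k + Tt k by move=> k; rewrite /ts /tseq big_ord_recr.
have ts_0 : ts 0%N = 0 by rewrite /ts /tseq big_ord0.
have hTpos : forall k, 0 < Tt k /\ 0 < ep k.
  by move=> k; have [/RltP h1 /RltP h2] := hpos k.
have ts0 : forall k, 0 <= ts k.
  elim=> [|k IH]; first by rewrite ts_0.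
  by rewrite tsS; have [h1 _] := hTpos k; lra.
have mono : forall a b, 0 <= a -> a <= b -> V b <= V a.
  move=> a b a0; rewrite le_eqVlt => /orP [/eqP -> //| ab].
  have hex : forall v, 0 ^+ 2 * ip v v <= ip (mx_RInt Q a b *m v) (mx_RInt Q a b *m v).
    by move=> v; rewrite expr2 !mul0r; exact: ip_ge0.
  have := energy hQ hI hx a0 ab (lexx 0) hex.
  rewrite !mul0r /V; lra.
have step : forall k, ep k / (1 + 2 * Tt k ^+ 2) * V (ts k) <= V (ts k) - V (ts k.+1)
                      /\ ep k <= Tt k.
  move=> k; have [T0 e0] := hTpos k.
  have hex := sigma_excite (ltW e0) (hsig k).
  have ab : ts k < ts k + Tt k by lra.
  have := energy hQ hI hx (ts0 k) ab (ltW e0) hex.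
  have -> : ts k + Tt k - ts k = Tt k by ring.
  rewrite tsS mulrAC => h1; split => //.
  have [hp hb] := mxRInt_props (ts0 k) (ltW ab) hQ hI.
  have eT : ts k + Tt k - ts k = Tt k by ring.
  rewrite ?RplusE eT in hb hp.
  pose v : 'cV[R]_n := const_mx 1.
  have vv : ip v v = n%:R.
    rewrite /ip (eq_bigr (fun _ => 1)); last by move=> j _; rewrite !mxE mulr1.
    by rewrite sum_const_ord mulr1.
  have vp : 0 < ip v v by rewrite vv ltr0n.
  have := hex v; have := qf_sq hp (ltW T0) hb v; have := hb v.
  move=> b1 b2 b3.
  have : ep k ^+ 2 * ip v v <= Tt k ^+ 2 * ip v v.
    apply: le_trans b3 _; apply: le_trans b2 _.
    rewrite expr2 -mulrA; apply: ler_wpM2l => //; exact: ltW.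
  rewrite ler_pM2r // => h2.
  by rewrite -(ler_pXn2r (n := 2)) // ?nnegrE ltW.
pose c k := ep k / (1 + 2 * Tt k ^+ 2).
pose S N := \sum_(k < N) c k.
have c0 : forall k, 0 <= c k.
  move=> k; have [T0 e0] := hTpos k; apply: divr_ge0; first exact: ltW.
  by have := sqr_ge0 (Tt k); lra.
have dec : forall N, V (ts N) * exp (S N) <= V 0.
  elim=> [|N IH].
    by rewrite /S big_ord0 ts_0 (_ : exp 0 = 1) ?mulr1 //; exact: exp_0.
  rewrite /S big_ord_recr /= -/(S N) exp_plus.
  have [st _] := step N.
  have ec : 0 < exp (c N) by apply/RltP; exact: exp_pos.
  have eS : 0 < exp (S N) by apply/RltP; exact: exp_pos.
  have h1 : (1 - c N) * exp (c N) <= 1.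
    have := exp_ineq1_le (- c N); move/RleP.
    have -> : exp (- c N) = (exp (c N))^-1 by rewrite exp_Ropp.
    rewrite RplusE RoppE R1E => h.
    by have := ler_wpM2r (ltW ec) h; rewrite mulVf ?gt_eqF.
  have h2 : V (ts N.+1) * exp (c N) <= V (ts N).
    have : V (ts N.+1) <= (1 - c N) * V (ts N) by rewrite /c; lra.
    move/(ler_wpM2r (ltW ec)) => h3; apply: le_trans h3 _.
    by rewrite mulrAC -[X in _ <= X]mul1r; apply: ler_wpM2r.
  apply: le_trans IH; rewrite RmultE.
  have -> : V (ts N.+1) * (exp (S N) * exp (c N)) = V (ts N.+1) * exp (c N) * exp (S N) by ring.
  by apply: ler_wpM2r => //; exact: ltW.
have dl : forall k, delta (ep k) (Tt k) <= 2 * c k.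
  by move=> k; have [T0 e0] := hTpos k; have [_ eT] := step k; exact: delta_le.
apply/is_lim_spec => eps.
have e0 : 0 < (eps : R) by apply/RltP; exact: cond_pos.
have H := (is_lim_seq_spec _ _).2 hlim.
have [N0 HN0] := H (2 * V 0 / (eps : R) ^+ 2).
have /RltP HN := HN0 N0 (le_n N0).
have sumd : \sum_(k < N0) delta (ep k) (Tt k) <= 2 * S N0.
  by rewrite /S mulr_sumr; apply: ler_sum => k _; apply: dl.
have e2 : 0 < (eps : R) ^+ 2 by rewrite exprn_gt0.
have SN : V 0 < S N0 * (eps : R) ^+ 2.
  have : 2 * V 0 / (eps : R) ^+ 2 < 2 * S N0 by apply: lt_le_trans HN sumd.
  rewrite ltr_pdivrMr // => h; nra.
have hd := dec N0.
have ex1 : 1 + S N0 <= exp (S N0).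
  by have := exp_ineq1_le (S N0); move/RleP; rewrite RplusE R1E.
have S0 : 0 <= S N0 by apply: sumr_ge0 => k _; exact: c0.
have Vsmall : V (ts N0) < (eps : R) ^+ 2.
  have h1 : V (ts N0) * (1 + S N0) <= V 0.
    by apply: le_trans hd; apply: ler_wpM2l.
  have h2 : V (ts N0) * (1 + S N0) < (eps : R) ^+ 2 * (1 + S N0) by nra.
  by rewrite ltr_pM2r in h2 => //; lra.
exists (ts N0) => t /RltP ht.
have Vt := mono _ _ (ts0 N0) (ltW ht).
have xs := entry_sq_le (x t) i.
apply/RltP; rewrite RabsE RminusE R0E subr0 ltr_norml.
rewrite -/(V t) in xs.
apply/andP; split; nra.
Qed.

Unset Implicit Arguments.
Local Close Scope ring_scope.
Open Scope R_scope.

Theorem corollary1 (n : nat) (Q : R -> 'M[R]_n) :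
  (forall t : R, 0 <= t -> Qbar (Q t)) ->
  riemann_integrable_nonneg Q ->
  sufficiently_exciting Q ->
  forall x : R -> 'cV[R]_n, is_solution Q x ->
  forall i : 'I_n, is_lim (fun t => x t i ord0) p_infty 0.
Proof.
move=> hQ hI hexc x hx i.
exact: (main_lemma hQ hI hexc hx i).
Qed.
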